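(* Let $v>0$, $d>0$, $s\ge d/2$ and $\theta\in[0,\pi/3)$. Let $\Lambda_\theta=\{a\,d\,(\cos\theta,\sin\theta)+b\,d\,(\cos(\theta+\pi/3),\sin(\theta+\pi/3)) : a,b\in\mathbb{Z}\}$. Robots start at time $0$ at the positions $(s,0)+q$ for all $q\in\Lambda_\theta$ with $q_x\ge0$ (where $q=(q_x,q_y)$), and move with constant velocity $(-v,0)$; the robot starting at $(s,0)+q$ has reached the target by time $T$ iff $\|(s,0)+q-(vt,0)\|\le s$ for some $t\in[0,T]$. Let $N(T)$ be the number of robots that have reached the target by time $T$ and $f_h(T,\theta)=\frac{N(T)-1}{T}$. Then $\lim_{T\to\infty}f_h(T,\theta)$ exists and $$\lim_{T\to\infty}f_h(T,\theta)\in\left(\frac{4vs}{\sqrt3 d^2}-\frac{2v\cos(\theta-\pi/6)}{\sqrt3 d},\ \frac{4vs}{\sqrt3 d^2}+\frac{2v\cos(\theta-\pi/6)}{\sqrt3 d}\right].$$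
   Context: The target is the closed disc of radius $s$ centred at the origin. The robots form a hexagonal packing (triangular lattice of spacing $d$) whose hexagonal packing angle is $\theta$: the angle between the $x$-axis and the segment from any robot to one of its neighbours at $(x+d\cos\theta,y+d\sin\theta)$; by periodicity angles are taken in $[0,\pi/3)$. The robot with $q=0$ is the first to reach the target, at time $0$. $f_h(T,\theta)$ is the throughput at time $T$. *)

(* Defs.v *)
From HB Require Import structures.
From mathcomp Require Import all_boot all_order all_algebra.
From mathcomp Require Import finmap.
From mathcomp Require Import all_classical all_reals all_analysis.
Set Implicit Arguments. Unset Strict Implicit. Unset Printing Implicit Defensive.
Import Order.TTheory GRing.Theory Num.Theory.
Import numFieldNormedType.Exports.
Local Open Scope classical_set_scope.
Local Open Scope ring_scope.

Definition latx {R : realType} (d th : R) (a b : int) : R :=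
  a%:~R * d * cos th + b%:~R * d * cos (th + pi / 3).
Definition laty {R : realType} (d th : R) (a b : int) : R :=
  a%:~R * d * sin th + b%:~R * d * sin (th + pi / 3).

Definition reached {R : realType} (v d s th T : R) (ab : int * int) : Prop :=
  0 <= latx d th ab.1 ab.2 /\
  exists t : R, 0 <= t <= T /\
    Num.sqrt ((s + latx d th ab.1 ab.2 - v * t) ^+ 2 + (laty d th ab.1 ab.2) ^+ 2) <= s.

Definition Nreached {R : realType} (v d s th T : R) : nat :=
  #|` fset_set [set ab : int * int | reached v d s th T ab] |%fset.

Definition f_h {R : realType} (v d s th T : R) : R :=
  ((Nreached v d s th T)%:R - 1) / T.

(* Main.v *)
Require Import Defs.
From HB Require Import structures.
From mathcomp Require Import all_boot all_order all_algebra.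
From mathcomp Require Import finmap.
From mathcomp Require Import all_classical all_reals all_analysis.
From mathcomp Require Import ring lra zify.
Import Order.TTheory GRing.Theory Num.Theory.
Import numFieldNormedType.Exports.
Local Open Scope classical_set_scope.
Local Open Scope ring_scope.
Set Implicit Arguments. Unset Strict Implicit.
Section P1.
Variable R : realType.
Implicit Types x y u g : R.

Definition fr (x : R) : R := x - (Num.floor x)%:~R.

Lemma fr_ge0 x : 0 <= fr x.
Proof. by rewrite /fr subr_ge0 floor_le. Qed.

Lemma fr_lt1 x : fr x < 1.
Proof. have := floorD1_gt x; rewrite /fr intrD; lra. Qed.

Lemma frDz x (z : int) : fr (x + z%:~R) = fr x.
Proof. by rewrite /fr floorDrz ?intr_int // intrKfloor intrD; ring. Qed.

Lemma fr_id x : 0 <= x < 1 -> fr x = x.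
Proof.
by move=> hx; rewrite /fr (@floor_def _ x 0) ?subr0 // add0r.
Qed.

Definition gs (n : nat) u g := \sum_(0 <= a < n) fr (u + a%:R * g).

Lemma sum01 (F : nat -> R) m n : (forall i, 0 <= F i < 1) ->
  0 <= \sum_(m <= i < n) F i <= (n - m)%:R.
Proof.
move=> hF; apply/andP; split; first by apply: sumr_ge0 => i _; case/andP: (hF i).
have -> : (n - m)%:R = \sum_(m <= i < n) (1:R) by rewrite sumr_const_nat.
apply: ler_sum => i _.
by case/andP: (hF i) => _ /ltW.
Qed.

Lemma gs_bnd n u g : 0 <= gs n u g <= n%:R.
Proof.
have := @sum01 (fun a => fr (u + a%:R * g)) 0 n.
by rewrite subn0; apply => i; rewrite fr_ge0 fr_lt1.
Qed.

Lemma sum_shift (F : nat -> R) n m :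
  \sum_(0 <= a < n) F (a + m)%N =
  \sum_(0 <= a < n) F a + \sum_(n <= a < n + m) F a - \sum_(0 <= a < m) F a.
Proof.
have e1 : \sum_(0 <= a < n) F (a + m)%N = \sum_(m <= a < n + m) F a.
  by rewrite [in RHS](_ : m = 0 + m)%N // big_addn add0n addnK.
have e2 : \sum_(0 <= a < n + m) F a = \sum_(0 <= a < m) F a + \sum_(m <= a < n + m) F a.
  by rewrite (@big_cat_nat _ _ _ m) //= leq_addl.
have e3 : \sum_(0 <= a < n + m) F a = \sum_(0 <= a < n) F a + \sum_(n <= a < n + m) F a.
  by rewrite (@big_cat_nat _ _ _ n) //= leq_addr.
rewrite e1; lra.
Qed.

Lemma gs_shift n m u g : `|gs n (u + m%:R * g) g - gs n u g| <= m%:R.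
Proof.
pose F a := fr (u + a%:R * g).
have e : gs n (u + m%:R * g) g = \sum_(0 <= a < n) F (a + m)%N.
  by apply: eq_bigr => a _; rewrite /F natrD; congr fr; ring.
rewrite e sum_shift.
have hF : forall i, 0 <= F i < 1 by move=> i; rewrite fr_ge0 fr_lt1.
have := @sum01 F n (n + m) hF; have := @sum01 F 0 m hF.
rewrite addKn subn0 /gs -/F => h1 h2.
rewrite ler_norml; apply/andP; split; lra.
Qed.

End P1.
Lemma fr_id2 (R : realType) (x : R) : 0 <= x -> x < 1 -> fr x = x.
Proof. by move=> h1 h2; apply: fr_id; rewrite h1 h2. Qed.
Section P2.
Variable R : realType.
Implicit Types x y u g : R.

Lemma gs_add_per n k u g (z : int) : k%:R * g = z%:~R ->
  gs (n + k) u g = gs k u g + gs n u g.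
Proof.
move=> hk; rewrite /gs (@big_cat_nat _ _ _ k) //= ?leq_addl //; congr (_ + _).
rewrite [in LHS](_ : k = 0 + k)%N // big_addn add0n addnK.
apply: eq_bigr => a _; rewrite natrD mulrDl hk addrA frDz //.
Qed.

Lemma gs_mul_per j r k u g (z : int) : k%:R * g = z%:~R ->
  gs (j * k + r) u g = j%:R * gs k u g + gs r u g.
Proof.
move=> hk; elim: j => [|j IH]; first by rewrite mul0n add0n mul0r add0r.
by rewrite mulSn -addnA addnC (gs_add_per _ _ hk) IH mulrSr; ring.
Qed.

Lemma gs_rat u g k (z : int) : (0 < k)%N -> k%:R * g = z%:~R ->
  forall n, `|gs n u g - n%:R * (gs k u g / k%:R)| <= k%:R.
Proof.
move=> k0 hk n; rewrite {1 2}(divn_eq n k) (gs_mul_per _ _ _ hk) natrD natrM.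
have kp : 0 < (k%:R : R) by rewrite ltr0n.
set q := (n %/ k)%:R; set r := (n %% k)%N.
have rk : (r%:R : R) <= k%:R by rewrite ler_nat ltnW // ltn_mod.
have := gs_bnd k u g; have := gs_bnd r u g => h1 h2.
set G := gs k u g.
have e : (q * k%:R + r%:R) * (G / k%:R) = q * G + r%:R * (G / k%:R).
  by field; rewrite gt_eqF.
rewrite e.
have h3 : 0 <= G / k%:R <= 1.
  case/andP: h2 => h2 h2'; apply/andP; split; first by apply: divr_ge0 => //; apply: ltW.
  by rewrite ler_pdivrMr // mul1r.
have r0 : 0 <= (r%:R : R) by [].
set GG := G / k%:R in h3 *.
have h4 : r%:R * GG <= r%:R by nra.
have h5 : 0 <= r%:R * GG by nra.
case/andP: h1 => h1 h1'.
rewrite ler_norml; apply/andP; split; lra.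
Qed.

Lemma gs_rat_lt1 u g k : (0 < k)%N -> gs k u g / k%:R < 1.
Proof.
move=> k0; have kp : 0 < (k%:R : R) by rewrite ltr0n.
rewrite ltr_pdivrMr // mul1r /gs.
have -> : (k%:R : R) = \sum_(0 <= a < k) (1:R) by rewrite sumr_const_nat subn0.
apply: ltr_sum_nat => // a _; exact: fr_lt1.
Qed.

End P2.
Section P3.
Variable R : realType.
Implicit Types x y u g t : R.

Definition ind (b : bool) : R := b%:R.
Lemma ind_true : ind true = 1. Proof. by []. Qed.
Lemma ind_false : ind false = 0. Proof. by []. Qed.
Definition cnt (J : nat) t : R := \sum_(0 <= j < J) ind (t <= j%:R).

Lemma cnt_ge0 J t : 0 <= cnt J t.
Proof. by apply: sumr_ge0 => j _; rewrite /ind ler0n. Qed.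

Lemma cnt_bnd J t : 0 <= t -> J%:R - t - 1 <= cnt J t /\ (cnt J t = 0 \/ cnt J t <= J%:R - t).
Proof.
move=> t0; elim: J => [|J [IH1 IH2]]; rewrite /cnt.
  by rewrite big_geq //; split; [rewrite sub0r; lra|left].
rewrite big_nat_recr //= -/(cnt J t).
have c0 := cnt_ge0 J t.
case: (lerP t J%:R) => htJ /=.
  have -> : ind true = 1 by [].
  split; first by rewrite -natr1; lra.
  right; case: IH2 => IH2; rewrite -natr1; lra.
have -> : ind false = 0 by []. rewrite addr0.
split; first by rewrite -natr1; lra.
by left; case: IH2 => // IH2; lra.
Qed.

Lemma sum_nat2 J : \sum_(0 <= j < J) (j%:R : R) * 2 = J%:R * (J%:R - 1).
Proof.
elim: J => [|J IH]; first by rewrite big_geq // mul0r.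
by rewrite big_nat_recr //= IH -natr1; ring.
Qed.

Lemma fr_step x0 e j : 0 <= x0 < 1 -> 0 < e -> j%:R * e < 1 ->
  fr (x0 + j%:R * e) = x0 + j%:R * e - ind (((1 - x0) / e) <= j%:R).
Proof.
move=> /andP[h0 h1] he hj.
have je : 0 <= j%:R * e by apply: mulr_ge0 => //; exact: ltW.
case: (lerP ((1 - x0) / e) j%:R) => h /=.
  have h' : 1 - x0 <= j%:R * e by rewrite ler_pdivrMr // in h.
  have -> : x0 + j%:R * e = (x0 + j%:R * e - 1) + (1%:~R) by rewrite (_ : 1%:~R = 1) //; ring.
  by rewrite frDz fr_id2 ?ind_true //; lra.
have h' : j%:R * e < 1 - x0 by rewrite ltr_pdivlMr // in h.
by rewrite fr_id2 ?ind_false ?subr0 //; lra.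
Qed.

Lemma ap_sum x e (J : nat) : 0 < e -> J%:R * e <= 1 -> 1 < (J%:R + 1) * e ->
  (1 <= J)%N ->
  `|\sum_(0 <= j < J) fr (x + j%:R * e) - J%:R / 2| <= 2.
Proof.
move=> he hJ1 hJ2 J1.
set x0 := fr x.
have hx0 : 0 <= x0 < 1 by rewrite fr_ge0 fr_lt1.
have ex : forall j, fr (x + j%:R * e) = fr (x0 + j%:R * e).
  move=> j; rewrite /x0 /fr.
  have -> : x + j%:R * e = (x - (Num.floor x)%:~R + j%:R * e) + (Num.floor x)%:~R by ring.
  by rewrite -/(fr _) frDz.
set t := (1 - x0) / e.
have es : \sum_(0 <= j < J) fr (x + j%:R * e) =
   J%:R * x0 + e * (J%:R * (J%:R - 1)) / 2 - cnt J t.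
  rewrite (eq_big_nat _ _ (F2 := fun j => x0 + j%:R * e - ind (t <= j%:R))); last first.
    move=> j /andP[_ hj]; rewrite ex fr_step //.
    have : (j.+1 <= J)%N := hj.
    rewrite -(ler_nat R) -natr1 => hj'.
    nra.
  rewrite sumrB big_split /= sumr_const_nat subn0 -sum_nat2 -!mulr_suml -mulr_natr /cnt; field; by [].
rewrite es.
have J1' : 1 <= (J%:R : R) by rewrite ler1n.
move: hx0 => /andP[h0 h1].
have ht1 : (1 - x0) * J%:R <= t.
  by rewrite /t ler_pdivlMr //; nra.
have ht2 : t <= (1 - x0) * (J%:R + 1).
  by rewrite /t ler_pdivrMr //; nra.
have [C1 C2] : J%:R - t - 1 <= cnt J t /\ (cnt J t = 0 \/ cnt J t <= J%:R - t).
  by apply: cnt_bnd; rewrite /t divr_ge0 //; lra.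
have c0 := cnt_ge0 J t.
have hP : (J%:R - 1) * (e * J%:R) <= J%:R - 1 by nra.
have hP2 : (J%:R - 1) * (e * J%:R) >= (J%:R - 1) * (1 - e) by nra.
have heJ : e * (J%:R - 1) <= 1 by nra.
rewrite ler_norml; apply/andP; split.
  case: C2 => C2; nra.
nra.
Qed.

End P3.
Lemma absz_natr (R : realType) (m : int) : 0 <= m -> ((`|m|%N)%:R : R) = m%:~R.
Proof. by move=> h; rewrite natr_absz ger0_norm. Qed.

Lemma pigeon (N : nat) (f : nat -> nat) : (forall i, (i <= N)%N -> (f i < N)%N) ->
  exists i j, (i < j <= N)%N /\ f i = f j.
Proof.
move=> hf.
have hF : forall i : 'I_N.+1, (f i < N)%N by move=> i; apply: hf; rewrite -ltnS.
pose F (i : 'I_N.+1) : 'I_N := Ordinal (hF i).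
apply: contrapT => hno.
have Finj : injective F.
  move=> i j /(congr1 val) /= hij; apply: val_inj => /=.
  case: (ltngtP i j) => // hlt; exfalso; apply: hno.
    by exists i, j; rewrite hlt -ltnS ltn_ord.
  by exists j, i; rewrite hlt -ltnS ltn_ord.
by have := leq_card F Finj; rewrite !card_ord ltnn.
Qed.

Section P4.
Variable R : realType.
Implicit Types x y u g t : R.

Definition irr g := forall (k : nat) (z : int), (0 < k)%N -> k%:R * g != z%:~R.

Lemma fr_int x : fr x = 0 -> x = (Num.floor x)%:~R.
Proof. by rewrite /fr => /eqP; rewrite subr_eq0 => /eqP. Qed.

Lemma fr_split x : x = fr x + (Num.floor x)%:~R.
Proof. by rewrite /fr; ring. Qed.

Lemma dir1 g (N : nat) : (0 < N)%N -> exists i j : nat, (i < j <= N)%N /\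
  `|fr (j%:R * g) - fr (i%:R * g)| < N%:R^-1.
Proof.
move=> N0; have Np : 0 < (N%:R : R) by rewrite ltr0n.
pose f (i : nat) := `|Num.floor (N%:R * fr (i%:R * g))|%N.
have hf0 : forall i, 0 <= Num.floor (N%:R * fr (i%:R * g)).
  by move=> i; rewrite floor_ge0; apply: mulr_ge0; [exact: ltW| exact: fr_ge0].
have [i [j [hij hfij]]] : exists i j, (i < j <= N)%N /\ f i = f j.
  apply: pigeon => i _.
  rewrite -(ltr_nat R) absz_natr //.
  have h := floor_le (N%:R * fr (i%:R * g)).
  have := fr_lt1 (i%:R * g); have := fr_ge0 (i%:R * g); nra.
exists i, j; split => //.
have hb : forall k, (f k)%:R <= N%:R * fr (k%:R * g) < (f k)%:R + 1.
  move=> k; rewrite /f absz_natr //.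
  have := floorD1_gt (N%:R * fr (k%:R * g)); rewrite intrD => h.
  by rewrite floor_le h.
have := hb i; have := hb j; rewrite hfij => /andP[h1 h2] /andP[h3 h4].
rewrite -div1r ltr_pdivlMr // -(gtr0_norm Np) -normrM ltr_norml.
apply/andP; split; lra.
Qed.

End P4.
Section P5.
Variable R : realType.
Implicit Types x y u g t : R.

Lemma intr_natz (n : nat) : (n%:Z)%:~R = n%:R :> R.
Proof. by []. Qed.

Lemma flo_nat x : 0 <= x -> exists m : nat, m%:R <= x < m%:R + 1.
Proof.
move=> x0; exists `|Num.floor x|%N.
rewrite absz_natr ?floor_ge0 // floor_le /=.
by have := floorD1_gt x; rewrite intrD.
Qed.

Lemma dir g : irr g -> forall e : R, 0 < e -> exists k : nat, (0 < k)%N /\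
  0 < fr (k%:R * g) <= e.
Proof.
move=> hirr e e0.
have ei : 0 <= e^-1 by rewrite invr_ge0 ltW.
have N1 : forall n : nat, (0 < n)%N -> n%:R^-1 <= (1:R).
  by move=> n n0; rewrite invf_le1 ?ltr0n // ler1n.
have [N0 /andP[hN1 hN2]] := flo_nat ei.
set N := N0.+1.
have NP : 0 < (N%:R : R) by rewrite ltr0n.
have hN : N%:R^-1 < e.
  rewrite -div1r ltr_pdivrMr // /N -natr1.
  have h1 : e * e^-1 = 1 by rewrite mulfV ?gt_eqF.
  have h2 : 0 < N0%:R + 1 - e^-1 by lra.
  have := mulr_gt0 e0 h2; rewrite !mulrDr mulrN h1; lra.
have [i [j [/andP[hij hjN] hd]]] := dir1 g (ltn0Sn N0).
set k0 := (j - i)%N.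
have k0P : (0 < k0)%N by rewrite subn_gt0.
set dl := fr (j%:R * g) - fr (i%:R * g).
set Z := Num.floor (j%:R * g) - Num.floor (i%:R * g).
have ek : k0%:R * g = dl + Z%:~R.
  rewrite /k0.
  rewrite natrB; last exact: ltnW.
  rewrite /dl /Z intrB /fr.
  ring.
have hdl : `|dl| < N%:R^-1 := hd.
case: (lerP 0 dl) => hdl0.
  exists k0; split => //.
  rewrite ek frDz fr_id2 //; last first.
    by rewrite ger0_norm // in hdl; have := N1 N isT; lra.
  rewrite ger0_norm // in hdl; apply/andP; split; last lra.
  rewrite lt0r hdl0 andbT; apply/negP => /eqP dl0.
  by have := hirr k0 Z k0P; rewrite ek dl0 add0r eqxx.
set eta := - dl.
have eta0 : 0 < eta by rewrite /eta oppr_gt0.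
have etaN : eta < N%:R^-1 by rewrite ltr0_norm // in hdl.
have ei' : 0 <= eta^-1 by rewrite invr_ge0 ltW.
have [m /andP[hm1 hm2]] := flo_nat ei'.
have hee : eta^-1 * eta = 1 by rewrite mulVf ?gt_eqF.
have hm1' : m%:R * eta <= 1.
  have h2 : 0 <= eta^-1 - m%:R by lra.
  have := mulr_ge0 h2 (ltW eta0); rewrite mulrBl hee; lra.
have hm2' : 1 < m%:R * eta + eta.
  have h2 : 0 < m%:R + 1 - eta^-1 by lra.
  have := mulr_gt0 h2 eta0; rewrite !mulrBl mulrDl hee mul1r; lra.
have em : (m * k0)%:R * g = (1 - m%:R * eta) + (m%:Z * Z - 1)%:~R.
  by rewrite natrM -mulrA ek /Z !(intrB, intrM, intr_natz) /eta; ring.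
have m0 : (0 < m)%N.
  rewrite lt0n; apply/negP => /eqP m0; rewrite m0 mul0r in hm2'.
  have := N1 N isT.
  lra.
exists (m * k0)%N; split; first by rewrite muln_gt0 m0.
have meta0 : 0 < m%:R * eta by apply: mulr_gt0; rewrite ?ltr0n.
rewrite em frDz fr_id2; try lra.
apply/andP; split; last lra.
rewrite subr_gt0 lt_neqAle hm1' andbT; apply/negP => /eqP h1.
have mk : (0 < m * k0)%N by rewrite muln_gt0 m0.
have := hirr (m * k0)%N (m%:Z * Z - 1) mk.
by rewrite em h1 subrr add0r eqxx.
Qed.

End P5.
Section P6.
Variable R : realType.
Implicit Types x y u g t : R.

Lemma norm_sum_le (m n : nat) (F : nat -> R) (c : R) :
  (forall i, (m <= i < n)%N -> `|F i| <= c) -> `|\sum_(m <= i < n) F i| <= (n - m)%:R * c.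
Proof.
move=> hF; apply: le_trans (ler_norm_sum _ _ _) _.
rewrite mulr_natl -sumr_const_nat; apply: ler_sum_nat => i hi; exact: hF.
Qed.

Lemma gs_irr g : irr g -> forall e : R, 0 < e -> exists B : R, forall n u,
  `|gs n u g - n%:R / 2| <= e * n%:R + B.
Proof.
move=> hirr e e0.
set e0' := e / (2 + 2 * e).
have e0'p : 0 < e0' by rewrite /e0' divr_gt0 //; lra.
have [k [k0 /andP[et0 et1]]] := dir hirr e0'p.
set eta := fr (k%:R * g) in et0 et1.
have ei : 0 <= eta^-1 by rewrite invr_ge0 ltW.
have [J /andP[hJ1 hJ2]] := flo_nat ei.
have hee : eta^-1 * eta = 1 by rewrite mulVf ?gt_eqF.
have hJe1 : J%:R * eta <= 1.
  have h2 : 0 <= eta^-1 - J%:R by lra.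
  have := mulr_ge0 h2 (ltW et0); rewrite mulrBl hee; lra.
have hJe2 : 1 < (J%:R + 1) * eta.
  have h2 : 0 < J%:R + 1 - eta^-1 by lra.
  have := mulr_gt0 h2 et0; rewrite !mulrBl hee; lra.
have hie : e0'^-1 <= eta^-1 by rewrite lef_pV2 ?posrE.
have he0 : e0'^-1 = 2 / e + 2 by rewrite /e0' invfM invrK; field; rewrite gt_eqF.
have hJ : 2 / e + 1 < J%:R by lra.
have ee : e * (2 / e) = 2 by field; rewrite gt_eqF.
have hJe : 2 <= e * J%:R.
  have := ltW hJ => h; have : e * (2/e + 1) <= e * J%:R by rewrite ler_pM2l.
  rewrite mulrDr ee; lra.
have J1 : (1 <= J)%N.
  rewrite -(ler_nat R); have : 0 <= 2 / e by rewrite divr_ge0 // ltW.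
  lra.
have Jp : 0 < (J%:R : R) by rewrite ltr0n.
exists (J * k)%:R => n u.
set S := \sum_(0 <= j < J) gs n (u + j%:R * eta) g.
have eS1 : S = \sum_(0 <= a < n) \sum_(0 <= j < J) fr ((u + a%:R * g) + j%:R * eta).
  rewrite /S /gs exchange_big_nat /=; apply: eq_bigr => a _; apply: eq_bigr => j _.
  congr fr; ring.
have hS1 : `|S - n%:R * (J%:R / 2)| <= n%:R * 2.
  have -> : n%:R * (J%:R / 2) = \sum_(0 <= a < n) (J%:R / 2 : R).
    by rewrite sumr_const_nat subn0 mulr_natl.
  rewrite eS1 -sumrB.
  have := @norm_sum_le 0 n (fun a => \sum_(0 <= j < J) fr (u + a%:R * g + j%:R * eta) - J%:R / 2) 2.
  rewrite subn0; apply => a _; exact: ap_sum.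
have eS2 : forall j, gs n (u + j%:R * eta) g = gs n (u + (j * k)%:R * g) g.
  move=> j; apply: eq_bigr => a _.
  have -> : u + (j * k)%:R * g + a%:R * g =
    (u + j%:R * eta + a%:R * g) + (j%:Z * Num.floor (k%:R * g))%:~R.
    have hk : k%:R * g = eta + (Num.floor (k%:R * g))%:~R := fr_split _.
    set F := Num.floor (k%:R * g) in hk *.
    by rewrite natrM -mulrA hk intrM intr_natz; ring.
  by rewrite frDz.
have hS2 : `|S - J%:R * gs n u g| <= J%:R * (J * k)%:R.
  have -> : J%:R * gs n u g = \sum_(0 <= j < J) gs n u g.
    by rewrite sumr_const_nat subn0 mulr_natl.
  rewrite /S -sumrB.
  have := @norm_sum_le 0 J (fun j => gs n (u + j%:R * eta) g - gs n u g) (J * k)%:R.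
  rewrite subn0; apply => j /andP[_ hj] /=; rewrite eS2.
  apply: le_trans (gs_shift _ _ _ _) _.
  by rewrite ler_nat leq_mul2r ltnW ?orbT.
set X := gs n u g in hS2 *; set B := (J * k)%:R in hS2 *.
have hn : 2 * n%:R <= e * J%:R * n%:R by apply: ler_wpM2r.
move: hS1 hS2; rewrite !ler_norml => /andP[a1 a2] /andP[b1 b2].
have c1 : J%:R * (X - n%:R / 2) <= J%:R * (e * n%:R + B) by lra.
have c2 : J%:R * (- (e * n%:R + B)) <= J%:R * (X - n%:R / 2) by lra.
rewrite ler_pM2l // in c1; rewrite ler_pM2l // in c2.
by rewrite c1 c2.
Qed.

Lemma avg_lim u g : exists L : R, 0 <= L < 1 /\ forall e : R, 0 < e ->
  exists B : R, forall n, `|gs n u g - n%:R * L| <= e * n%:R + B.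
Proof.
case: (pselect (irr g)) => hg.
  exists (1/2); split; first by apply/andP; split; lra.
  move=> e e0; have [B hB] := gs_irr hg e0; exists B => n.
  by rewrite div1r; exact: hB n u.
move/existsNP: hg => [k /existsNP [z /not_implyP [k0 /negP /negPn /eqP hk]]].
exists (gs k u g / k%:R); split.
  apply/andP; split; last exact: gs_rat_lt1.
  by apply: divr_ge0; [case/andP: (gs_bnd k u g)|rewrite ler0n].
move=> e e0; exists k%:R => n.
apply: le_trans (gs_rat u k0 hk n) _.
have : 0 <= e * n%:R by apply: mulr_ge0; [exact: ltW|].
lra.
Qed.

End P6.
Section Trig.
Variable R : realType.

Lemma cos_pi3 : cos (pi / 3) = 1 / 2 :> R.
Proof.
set a := pi / 3 : R.
have h3 : pi = a + a + a by rewrite /a; field.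
have c0 : 0 < cos a.
  apply: cos_gt0_pihalf; have := pi_gt0 R; rewrite /a => hp.
  apply/andP; split; lra.
have hp := cos2Dsin2 a.
have : cos pi = (-1 : R) := cospi R.
rewrite h3 !cosD !sinD => h.
have hc : (cos a + 1) * (2 * cos a - 1) ^+ 2 = 0.
  match type of h with ?L = _ =>
    have key : (cos a + 1) * (2 * cos a - 1) ^+ 2 =
      (L + 1) + 3 * cos a * (cos a ^+ 2 + sin a ^+ 2 - 1) by ring end.
  by rewrite key h hp; ring.
move/eqP: hc; rewrite mulf_eq0 => /orP[|]; first by move/eqP => ?; lra.
rewrite expf_eq0 /= => /eqP; lra.
Qed.

Lemma sin_pi3 : sin (pi / 3) = Num.sqrt 3 / 2 :> R.
Proof.
have hp := cos2Dsin2 (pi / 3 : R); rewrite cos_pi3 in hp.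
have s0 : 0 < sin (pi / 3 : R).
  apply: sin_gt0_pi; have := pi_gt0 R => h; apply/andP; split; lra.
have q3 : Num.sqrt 3 ^+ 2 = 3 :> R by rewrite sqr_sqrtr.
have q0 : 0 <= Num.sqrt 3 :> R by [].
set x := sin (pi / 3) in hp s0 *; set y := Num.sqrt 3 in q3 q0 *.
have hx : x ^+ 2 = 3 / 4 by lra.
have e : (x - y / 2) * (x + y / 2) = 0.
  have -> : (x - y / 2) * (x + y / 2) = x ^+ 2 - y ^+ 2 / 4 by rewrite !expr2; field; by [].
  by rewrite hx q3 subrr.
move/eqP: e; rewrite mulf_eq0 => /orP[/eqP|/eqP]; lra.
Qed.

End Trig.
Lemma int_aux1 (A a Z : int) : A <= a < A + (Z - 2 * A + 1) -> A <= a /\ a <= Z - A.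
Proof. lia. Qed.
Lemma int_aux2 (A Z : int) : 2 * A <= Z -> 0 <= Z - 2 * A + 1.
Proof. lia. Qed.
Lemma int_aux3 (A Z : int) : 0 <= A -> 0 <= Z -> 0 <= Z + 2 * A + 1.
Proof. lia. Qed.
Lemma int_aux4 (A a Z : int) : - A < a + 1 -> a < Z + A + 1 -> - A <= a < - A + (Z + 2 * A + 1).
Proof. lia. Qed.

Lemma sq_le (R : realType) (x s : R) : 0 <= s -> x ^+ 2 <= s ^+ 2 -> -s <= x <= s.
Proof.
move=> s0 h; apply/andP; split.
  rewrite leNgt; apply/negP => hx; have : s ^+ 2 < x ^+ 2 by nra.
  lra.
rewrite leNgt; apply/negP => hx; have : s ^+ 2 < x ^+ 2 by nra.
lra.
Qed.

Lemma int_aux5 (A Z : int) : 2 * A < Z + 1 -> 2 * A <= Z.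
Proof. lia. Qed.

Section Geo.
Variable R : realType.
Variables (v d s th : R).
Hypotheses (v0 : 0 < v) (d0 : 0 < d) (hs : d / 2 <= s) (hth : 0 <= th < pi / 3).

Definition c1 := sin (th + pi / 3).
Definition co := cos (th + pi / 3).
Definition kap := d * (Num.sqrt 3 / 2).
Definition w := s / (d * c1).
Definition gm := sin th / c1.

Lemma s0 : 0 <= s. Proof. have := d0. have := hs. lra. Qed.

Lemma c1_gt0 : 0 < c1.
Proof.
rewrite /c1; apply: sin_gt0_pi; have := pi_gt0 R; case/andP: hth => h1 h2 hp.
apply/andP; split; lra.
Qed.

Lemma kap_gt0 : 0 < kap.
Proof. by rewrite /kap mulr_gt0 // divr_gt0 // sqrtr_gt0. Qed.

Lemma co_bnd : -1 <= co <= 1.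
Proof. by rewrite /co cos_geN1 cos_le1. Qed.

Lemma qx_id (a b : int) :
  latx d th a b * c1 = a%:~R * kap + laty d th a b * co.
Proof.
have h : c1 * cos th - co * sin th = Num.sqrt 3 / 2.
  by rewrite /c1 /co -sinB (_ : th + pi / 3 - th = pi / 3) ?sin_pi3 //; ring.
rewrite /latx /laty /kap -h /c1 /co; ring.
Qed.

Definition lo (a : int) : int := - Num.floor (w + a%:~R * gm).
Definition hi (a : int) : int := Num.floor (w - a%:~R * gm).

Lemma in_strip (a b : int) :
  (-s <= laty d th a b <= s) = (lo a <= b <= hi a).
Proof.
have c1p := c1_gt0.
have dc : 0 < d * c1 by rewrite mulr_gt0.
have ey : laty d th a b = (b%:~R + a%:~R * gm) * (d * c1).
  by rewrite /laty /gm -/c1; field; rewrite gt_eqF.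
have ew : s / (d * c1) = w by [].
rewrite /lo /hi; apply/idP/idP => /andP[h1 h2]; apply/andP; split.
- rewrite lerNl floor_ge_int rmorphN /=.
  move: h1; rewrite ey -ler_pdivrMr // mulNr ew; lra.
- rewrite floor_ge_int.
  move: h2; rewrite ey -ler_pdivlMr // ew; lra.
- move: h1; rewrite lerNl floor_ge_int rmorphN /= => h1.
  rewrite ey -ler_pdivrMr // mulNr ew; lra.
- move: h2; rewrite floor_ge_int => h2.
  rewrite ey -ler_pdivlMr // ew; lra.
Qed.

Definition mm (a : int) : nat := `|(hi a - lo a + 1)%R|%N.

Lemma hl_ge0 a : 0 <= hi a - lo a + 1.
Proof.
rewrite /hi /lo opprK.
have h1 := floorD1_gt (w - a%:~R * gm); have h2 := floorD1_gt (w + a%:~R * gm).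
rewrite !intrD in h1 h2.
have w0 : 0 <= w by rewrite /w divr_ge0 ?s0 // mulr_ge0 // ltW // c1_gt0.
have : (-2)%:~R < (Num.floor (w - a%:~R * gm) + Num.floor (w + a%:~R * gm))%:~R :> R.
  by rewrite intrD; rewrite (_ : (-2)%:~R = -2 :> R) //; lra.
rewrite ltr_int; lia.
Qed.

Lemma mm_real a : (mm a)%:R =
  2 * w + 1 - fr (w + a%:~R * gm) - fr (w + a%:~R * (- gm)) :> R.
Proof.
rewrite /mm absz_natr ?hl_ge0 // /hi /lo /fr mulrN !intrD intrN.
by rewrite (_ : 1%:~R = 1 :> R) //; ring.
Qed.

Definition bseq (a : int) : seq int := [seq lo a + j%:Z | j <- iota 0 (mm a)].

Lemma mem_bseq a b : (b \in bseq a) = (lo a <= b <= hi a).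
Proof.
have h := hl_ge0 a.
have e : (mm a)%:Z = hi a - lo a + 1 by rewrite /mm gez0_abs.
apply/mapP/idP.
  move=> [j]; rewrite mem_iota add0n => /andP[_ hj] ->.
  have : (j%:Z < (mm a)%:Z) by rewrite ltz_nat.
  rewrite e; lia.
move=> /andP[h1 h2]; exists `|b - lo a|%N.
  rewrite mem_iota add0n /=; rewrite -ltz_nat e gez0_abs; lia.
rewrite gez0_abs; lia.
Qed.

Lemma uniq_bseq a : uniq (bseq a).
Proof.
by rewrite map_inj_uniq ?iota_uniq // => i j /addrI [].
Qed.

Definition rng (l : int) (n : nat) : seq int := [seq l + i%:Z | i <- iota 0 n].

Lemma mem_rng l n a : (a \in rng l n) = (l <= a < l + n%:Z).
Proof.
apply/mapP/idP.
  move=> [j]; rewrite mem_iota add0n => /andP[_ hj] ->.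
  have : (j%:Z < n%:Z) by rewrite ltz_nat.
  lia.
move=> /andP[h1 h2]; exists `|a - l|%N.
  rewrite mem_iota add0n /=; rewrite -ltz_nat gez0_abs; lia.
rewrite gez0_abs; lia.
Qed.

Lemma uniq_rng l n : uniq (rng l n).
Proof.
by rewrite map_inj_uniq ?iota_uniq // => i j /addrI [].
Qed.

Definition Lp (sA : seq int) : seq (int * int) := [seq (a, b) | a <- sA, b <- bseq a].

Definition strip (sA : seq int) : set (int * int) :=
  [set ab : int * int | ab.1 \in sA /\ -s <= laty d th ab.1 ab.2 <= s].

Lemma eS_strip sA : strip sA = [set` [fset x in Lp sA]%fset].
Proof.
apply/seteqP; split => -[a b] /=; rewrite inE /=.
  move=> [ha hb]; apply/allpairsPdep; exists a, b; split => //.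
  by rewrite mem_bseq -in_strip.
move/allpairsPdep => [a' [b' [ha hb [-> ->]]]]; split => //.
by rewrite in_strip -mem_bseq.
Qed.

Lemma strip_fin sA : finite_set (strip sA).
Proof. by rewrite eS_strip; exact: finite_fset. Qed.

Lemma card_strip (sA : seq int) : uniq sA ->
  #|` fset_set (strip sA) |%fset = (\sum_(a <- sA) mm a)%N.
Proof.
move=> uA.
rewrite eS_strip set_fsetK card_fseq undup_id.
  rewrite size_allpairs_dep sumnE big_map; apply: eq_bigr => a _.
  by rewrite size_map size_iota.
apply: allpairs_uniq_dep => //; first by move=> a _; exact: uniq_bseq.
by move=> [a1 b1] [a2 b2] _ _ /= [e1 e2]; subst.
Qed.

Lemma sum_rng (l : int) (n : nat) :
  ((\sum_(a <- rng l n) mm a)%N%:R : R) =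
  n%:R * (2 * w + 1) - gs n (w + l%:~R * gm) gm - gs n (w + l%:~R * (- gm)) (- gm).
Proof.
rewrite big_map natr_sum.
have -> : \sum_(i <- iota 0 n) ((mm (l + i%:Z))%:R : R) =
    \sum_(0 <= i < n) ((2 * w + 1) - fr (w + l%:~R * gm + i%:R * gm)
       - fr (w + l%:~R * (- gm) + i%:R * (- gm))).
  rewrite /index_iota subn0; apply: eq_bigr => i _; rewrite mm_real intrD intr_natz.
  by congr (_ - fr _ - fr _); ring.
by rewrite sumrB sumrB sumr_const_nat subn0 [n%:R * _]mulr_natl.
Qed.

Definition Zt (T : R) : int := Num.floor (v * T * c1 / kap).

Definition Acst : nat := (`|Num.floor ((s * c1 + s) / kap)|%N).+1.

Lemma A_ok : s * c1 + s <= Acst%:R * kap.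
Proof.
have kp := kap_gt0; have cp := c1_gt0; have sp := s0.
have x0 : 0 <= (s * c1 + s) / kap.
  apply: divr_ge0; last exact: ltW.
  have := mulr_ge0 sp (ltW cp); lra.
rewrite /Acst -natr1 absz_natr ?floor_ge0 //.
have := floorD1_gt ((s * c1 + s) / kap); rewrite intrD (_ : 1%:~R = 1) // => h.
by rewrite -ler_pdivrMr //; apply: ltW.
Qed.

Lemma Z_bnd T : (Zt T)%:~R * kap <= v * T * c1 < ((Zt T)%:~R + 1) * kap.
Proof.
have kp := kap_gt0.
have h1 := floor_le (v * T * c1 / kap); have h2 := floorD1_gt (v * T * c1 / kap).
rewrite intrD (_ : 1%:~R = 1) // in h2.
rewrite /Zt; apply/andP; split.
  by rewrite -ler_pdivlMr.
by rewrite -ltr_pdivrMr.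
Qed.

Definition reachset T : set (int * int) := [set ab | reached v d s th T ab].

Lemma incl_in T : (2 * Acst%:Z <= Zt T)%R ->
  strip (rng Acst%:Z `|(Zt T - 2 * Acst%:Z + 1)%R|%N) `<=` reachset T.
Proof.
move=> hZ [a b] /= [ha hb]; rewrite /reachset /reached /=.
rewrite mem_rng gez0_abs in ha; last exact: int_aux2.
have [ha' ha''] := int_aux1 ha.
have hA := A_ok; have kp := kap_gt0; have cp := c1_gt0; have sp := s0.
have [hZ1 _] := andP (Z_bnd T).
have hco := co_bnd.
have eq := qx_id a b.
set X := latx d th a b in eq *; set Y := laty d th a b in hb eq *.
have hYco : -s <= Y * co <= s.
  case/andP: hco => h1 h2; case/andP: hb => h3 h4; apply/andP; split; nra.
have ha1 : Acst%:R * kap <= a%:~R * kap.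
  by rewrite ler_pM2r // -intr_natz ler_int.
have ha2 : a%:~R * kap <= (Zt T)%:~R * kap - Acst%:R * kap.
  by rewrite -mulrBl ler_pM2r // -intr_natz -intrB ler_int.
have hX1 : s * c1 <= X * c1 by case/andP: hYco => ? ?; lra.
have hX2 : X * c1 <= (v * T - s) * c1 by case/andP: hYco => ? ?; lra.
rewrite ler_pM2r // in hX1; rewrite ler_pM2r // in hX2.
split; first lra.
exists ((s + X) / v); split.
  apply/andP; split; first by apply: divr_ge0; [lra | exact: ltW].
  by rewrite ler_pdivrMr //; lra.
rewrite (_ : s + X - v * ((s + X) / v) = 0); last by field; rewrite gt_eqF.
by rewrite expr0n /= add0r sqrtr_sqr ler_norml.
Qed.

Lemma incl_out T : 0 <= T ->
  reachset T `<=` strip (rng (- Acst%:Z) `|(Zt T + 2 * Acst%:Z + 1)%R|%N).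
Proof.
move=> T0 [a b] /= [hX [t [/andP[t0 tT] hd]]].
have hA := A_ok; have kp := kap_gt0; have cp := c1_gt0; have sp := s0.
have [hZ1 hZ2] := andP (Z_bnd T).
have Z0 : 0 <= Zt T.
  rewrite /Zt floor_ge0; apply: divr_ge0; last exact: ltW.
  by apply: mulr_ge0; [apply: mulr_ge0; [exact: ltW|exact: T0] | exact: ltW].
have hco := co_bnd.
have eq := qx_id a b.
set X := latx d th a b in hX eq hd *; set Y := laty d th a b in eq hd *.
set Q := (s + X - v * t) ^+ 2 + Y ^+ 2 in hd.
have Q0 : 0 <= Q by rewrite /Q addr_ge0 // sqr_ge0.
have hQ : Q <= s ^+ 2.
  have := sqr_sqrtr Q0; have := sqrtr_ge0 Q; nra.
have hY : -s <= Y <= s.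
  apply: sq_le => //; rewrite /Q in hQ; have := sqr_ge0 (s + X - v * t); lra.
split; last by [].
rewrite mem_rng gez0_abs; last exact: int_aux3.
have hYco : -s <= Y * co <= s.
  case/andP: hco => h1 h2; case/andP: hY => h3 h4; apply/andP; split; nra.
have hXv : X <= v * T.
  have : (s + X - v * t) ^+ 2 <= s ^+ 2 by rewrite /Q in hQ; have := sqr_ge0 Y; lra.
  have : v * t <= v * T by rewrite ler_pM2l.
  nra.
have hXc : X * c1 <= v * T * c1 by rewrite ler_pM2r.
case/andP: hYco => hy1 hy2.
have l1 : (- Acst%:Z)%:~R * kap < a%:~R * kap + kap.
  rewrite intrN intr_natz; nra.
have l2 : a%:~R * kap < ((Zt T)%:~R + Acst%:R + 1) * kap by nra.
rewrite -(ltr_pM2r kp) in l2.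
rewrite (_ : a%:~R * kap + kap = (a + 1)%:~R * kap) in l1; last first.
  by rewrite intrD (_ : 1%:~R = 1) //; ring.
rewrite ltr_pM2r // ltr_int in l1.
rewrite ltr_pM2r // in l2.
have l2' : a%:~R < (Zt T + Acst%:Z + 1)%:~R :> R.
  by rewrite !intrD intr_natz (_ : 1%:~R = 1) // -(ltr_pM2r kp).
rewrite ltr_int in l2'.
exact: int_aux4 l1 l2'.
Qed.

Lemma N_bounds T : 0 <= T -> (2 * Acst%:Z <= Zt T)%R ->
  ((\sum_(a <- rng Acst%:Z `|(Zt T - 2 * Acst%:Z + 1)%R|%N) mm a
     <= Nreached v d s th T)
  /\ (Nreached v d s th T <=
      \sum_(a <- rng (- Acst%:Z) `|(Zt T + 2 * Acst%:Z + 1)%R|%N) mm a))%N.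
Proof.
move=> T0 hZ.
have hin := incl_in hZ; have hout := incl_out T0.
have fo := strip_fin (rng (- Acst%:Z) `|(Zt T + 2 * Acst%:Z + 1)%R|%N).
have fr' : finite_set (reachset T) := sub_finite_set hout fo.
have fi := strip_fin (rng Acst%:Z `|(Zt T - 2 * Acst%:Z + 1)%R|%N).
rewrite /Nreached -!card_strip ?uniq_rng //; split; apply: fsubset_leq_card.
  by rewrite -fset_set_sub.
by rewrite -fset_set_sub.
Qed.

Lemma shift_abs n (u g : R) (l : int) (m : nat) : (l = m%:Z \/ l = - m%:Z) ->
  `|gs n (u + l%:~R * g) g - gs n u g| <= m%:R.
Proof.
case=> ->; first by rewrite intr_natz; exact: gs_shift.
have := gs_shift n m (u + (- m%:Z)%:~R * g) g.
rewrite intrN intr_natz (_ : u + - m%:R * g + m%:R * g = u); last by ring.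
by rewrite distrC.
Qed.

Lemma w_ge0 : 0 <= w.
Proof. by rewrite /w divr_ge0 ?s0 // mulr_ge0 // ltW // c1_gt0. Qed.

Lemma sum_est : exists mu : R, (2 * w - 1 < mu <= 2 * w + 1) /\
  forall e : R, 0 < e -> exists B : R, forall (l : int) (n : nat),
  (l = Acst%:Z \/ l = - Acst%:Z) ->
  `|((\sum_(a <- rng l n) mm a)%N%:R) - n%:R * mu| <= e * n%:R + B.
Proof.
have [L1 [/andP[L10 L11] hL1]] := avg_lim w gm.
have [L2 [/andP[L20 L21] hL2]] := avg_lim w (- gm).
exists (2 * w + 1 - L1 - L2); split; first by apply/andP; split; lra.
move=> e e0.
have e2 : 0 < e / 2 by rewrite divr_gt0.
have [B1 hB1] := hL1 _ e2; have [B2 hB2] := hL2 _ e2.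
exists (B1 + B2 + 2 * Acst%:R) => l n hl.
rewrite sum_rng.
have s1 := shift_abs n w gm hl.
have hl' : (l = Acst%:Z \/ l = - Acst%:Z) := hl.
have s2 := shift_abs n w (- gm) hl'.
have b1 := hB1 n; have b2 := hB2 n.
move: s1 s2 b1 b2; rewrite !ler_norml.
move=> /andP[a1 a2] /andP[a3 a4] /andP[a5 a6] /andP[a7 a8].
apply/andP; split; lra.
Qed.

Definition rr := v * c1 / kap.

Lemma rr_gt0 : 0 < rr.
Proof. by rewrite /rr divr_gt0 ?kap_gt0 // mulr_gt0 // c1_gt0. Qed.

Lemma Z_bnd2 T : (Zt T)%:~R <= rr * T < (Zt T)%:~R + 1.
Proof.
have kp := kap_gt0; have [h1 h2] := andP (Z_bnd T).
have e : rr * T = v * T * c1 / kap by rewrite /rr; field; rewrite gt_eqF.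
rewrite e ler_pdivlMr // ltr_pdivrMr //; by rewrite h1 h2.
Qed.

Lemma N_est : exists mu : R, (2 * w - 1 < mu <= 2 * w + 1) /\
  forall e : R, 0 < e -> exists K T0 : R, 0 <= T0 /\ forall T, T0 <= T ->
  `|(Nreached v d s th T)%:R - mu * rr * T| <= e * T + K.
Proof.
have [mu [/andP[m1 m2] hest]] := sum_est.
exists mu; split; first by apply/andP; split.
move=> e e0.
have rp := rr_gt0.
set e1 := e / (rr + 1).
have e1p : 0 < e1 by rewrite /e1 divr_gt0 //; lra.
have e1r : e1 * rr <= e.
  rewrite /e1 mulrAC ler_pdivrMr; last lra.
  by rewrite ler_pM2l //; lra.
have [B hB] := hest _ e1p.
set a := (Acst%:R : R).
have a0 : 0 <= a by rewrite /a ler0n.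
set M := 2 * w + 1.
have hM : `|mu| <= M.
  have w0 := w_ge0; rewrite ler_norml; apply/andP; split; rewrite /M; lra.
exists ((2 * a + 1) * M + e1 * (2 * a + 1) + B), ((2 * a + 1) / rr).
split; first by rewrite divr_ge0 //; [lra | exact: ltW].
move=> T hT.
have T0 : 0 <= T by apply: le_trans hT; rewrite divr_ge0 //; [lra|exact: ltW].
have rT : 2 * a + 1 <= rr * T by rewrite [rr * T]mulrC -ler_pdivrMr.
have [z1 z2] := andP (Z_bnd2 T).
set z := (Zt T)%:~R in z1 z2.
have hZ : (2 * Acst%:Z <= Zt T)%R.
  apply: int_aux5; rewrite -(ltr_int R) intrD intrM intr_natz -/a -/z.
  by rewrite ?intr_natz -/a ?natrD; lra.
have [N1 N2] := N_bounds T0 hZ.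
have n1e : ((`|(Zt T - 2 * Acst%:Z + 1)%R|%N)%:R : R) = z - 2 * a + 1.
  rewrite absz_natr; last exact: int_aux2.
  by rewrite !intrD intrN intrM intr_natz (_ : 2%:~R = 2) // (_ : 1%:~R = 1).
have n2e : ((`|(Zt T + 2 * Acst%:Z + 1)%R|%N)%:R : R) = z + 2 * a + 1.
  rewrite absz_natr; last by apply: int_aux3 => //; rewrite -(ler_int R); lra.
  by rewrite !intrD intrM intr_natz (_ : 2%:~R = 2) // (_ : 1%:~R = 1).
have S1 := hB _ `|(Zt T - 2 * Acst%:Z + 1)%R|%N (or_introl erefl).
have S2 := hB _ `|(Zt T + 2 * Acst%:Z + 1)%R|%N (or_intror erefl).
rewrite n1e in S1; rewrite n2e in S2.
move: N1 N2; rewrite -!(ler_nat R) => N1 N2.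
set Nr := ((Nreached v d s th T)%:R : R) in N1 N2 *.
set S1r := ((\sum_(a <- _) mm a)%N%:R : R) in N1 S1.
set S2r := ((\sum_(a <- _) mm a)%N%:R : R) in N2 S2.
have d1 : `|(z - 2 * a + 1 - rr * T) * mu| <= (2 * a + 1) * M.
  rewrite normrM; apply: ler_pM => //.
  by rewrite ler_norml; apply/andP; split; lra.
have d2 : `|(z + 2 * a + 1 - rr * T) * mu| <= (2 * a + 1) * M.
  rewrite normrM; apply: ler_pM => //.
  by rewrite ler_norml; apply/andP; split; lra.
have f1 : e1 * (z - 2 * a + 1) <= e * T + e1.
  have : e1 * (z - 2 * a + 1) <= e1 * (rr * T + 1) by rewrite ler_pM2l //; lra.
  have := ler_wpM2r T0 e1r. lra.
have f2 : e1 * (z + 2 * a + 1) <= e * T + e1 * (2 * a + 1).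
  have : e1 * (z + 2 * a + 1) <= e1 * (rr * T + 2 * a + 1) by rewrite ler_pM2l //; lra.
  have := ler_wpM2r T0 e1r. lra.
move: S1 S2 d1 d2; rewrite !ler_norml => /andP[s1 s1'] /andP[s2 s2'] /andP[d1 d1'] /andP[d2 d2'].
have e1p' := ltW e1p.
apply/andP; split; nra.
Qed.

End Geo.
Unset Implicit Arguments.

Theorem proposition6 (R : realType) (v d s th : R) :
  0 < v -> 0 < d -> d / 2 <= s -> 0 <= th < pi / 3 ->
  exists L : R,
    f_h v d s th T @[T --> +oo] --> L /\
    4 * v * s / (Num.sqrt 3 * d ^+ 2) - 2 * v * cos (th - pi / 6) / (Num.sqrt 3 * d) < L /\
    L <= 4 * v * s / (Num.sqrt 3 * d ^+ 2) + 2 * v * cos (th - pi / 6) / (Num.sqrt 3 * d).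
Proof.
move=> v0 d0 hs hth.
have [mu [/andP[m1 m2] hest]] := N_est v0 d0 hs hth.
have rp := rr_gt0 v0 d0 hth.
set r := rr v d th in rp hest *.
exists (mu * r); split.
  apply/cvgrPdist_le => eps eps0.
  have e2 : 0 < eps / 2 by rewrite divr_gt0.
  have [K [T0 [T00 hK]]] := hest (eps / 2) e2.
  exists (Num.max 1 (Num.max T0 (2 * (`|K| + 1) / eps))); split; first by rewrite num_real.
  move=> T; rewrite !gt_max => /andP[T1 /andP[T2 T3]].
  have Tp : 0 < T by lra.
  have := hK T (ltW T2).
  set Nr := ((Nreached v d s th T)%:R : R) => hN.
  rewrite /f_h -/Nr.
  have -> : mu * r - (Nr - 1) / T = (mu * r * T - Nr + 1) / T by field; rewrite gt_eqF.
  rewrite normrM normfV (gtr0_norm Tp) ler_pdivrMr //.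
  have hK' : `|K| + 1 <= eps / 2 * T.
    move: T3; rewrite ltr_pdivrMr // => h; lra.
  have hk := ler_norm K.
  move: hN; rewrite ler_norml => /andP[h1 h2].
  rewrite ler_norml; apply/andP; split; lra.
have c1p := c1_gt0 hth; have kp := kap_gt0 d0.
have q0 : 0 < Num.sqrt 3 :> R by rewrite sqrtr_gt0.
have ec : cos (th - pi / 6) = c1 th.
  by rewrite -sinDpihalf /c1; congr sin; field.
have e1 : 4 * v * s / (Num.sqrt 3 * d ^+ 2) = 2 * w d s th * r.
  rewrite /r /rr /w /kap; field.
  by rewrite !gt_eqF // ?mulr_gt0 // ?expr_gt0.
have e3 : 2 * v * cos (th - pi / 6) / (Num.sqrt 3 * d) = r.
  rewrite ec /r /rr /kap; field.
  by rewrite !gt_eqF // ?mulr_gt0.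
rewrite e1 e3; split.
  have h : (2 * w d s th - 1) * r < mu * r by rewrite ltr_pM2r.
  by rewrite mulrBl mul1r in h.
have h : mu * r <= (2 * w d s th + 1) * r by rewrite ler_pM2r.
by rewrite mulrDl mul1r in h.
Qed.
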